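(* Let $n\ge2$, let $G$ be the Lie group of invertible $n\times n$ upper triangular real matrices, and let $Z$ be the center of $G$ (the nonzero real scalar matrices). Then $G/Z$ has the topological $R_\infty$-property.
   Context: For an automorphism $\varphi$ of a group $G$, the $\varphi$-twisted conjugacy classes are the equivalence classes of the relation $x\sim_\varphi y$ iff $y=gx\varphi(g)^{-1}$ for some $g\in G$; $R(\varphi)\in\mathbb{N}\cup\{\infty\}$ is their number. A topological group $G$ has the topological $R_\infty$-property if $R(\varphi)=\infty$ for every automorphism $\varphi$ of $G$ that is a homeomorphism (for a Lie group: every continuous automorphism). *)

(* Defs.v *)
From HB Require Import structures.
From mathcomp Require Import all_boot all_order all_algebra generic_quotient.
From mathcomp Require Import all_classical all_reals topology normedtype.
Import numFieldNormedType.Exports.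
Set Implicit Arguments. Unset Strict Implicit. Unset Printing Implicit Defensive.
Import Order.TTheory GRing.Theory Num.Theory.
Local Open Scope classical_set_scope.
Local Open Scope ring_scope.

Definition upper_tri (R : nzRingType) (n : nat) (A : 'M[R]_n) : bool :=
  [forall i : 'I_n, forall j : 'I_n, (j < i)%N ==> (A i j == 0)].

Definition UTset (R : realType) (n : nat) : set 'M[R]_n :=
  [set A | upper_tri A && (A \in unitmx)].

(* G as a topological space: the subspace (initial) topology induced by
   the inclusion into 'M[R]_n (= R^(n*n)). *)
Notation UT R n := (set_type (@UTset R n)).

Lemma upper_tri_mul (R : realType) (n : nat) (A B : 'M[R]_n) :
  upper_tri A -> upper_tri B -> upper_tri (A *m B).
Proof.
move=> /forallP hA /forallP hB; apply/forallP => i; apply/forallP => j.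
apply/implyP => ji; rewrite mxE big1 // => k _.
have [ki|ik] := ltnP k i.
  by move: (hA i) => /forallP /(_ k) /implyP /(_ ki) /eqP ->; rewrite mul0r.
have jk : (j < k)%N by apply: (leq_trans ji ik).
by move: (hB k) => /forallP /(_ j) /implyP /(_ jk) /eqP ->; rewrite mulr0.
Qed.

Lemma UTset_mul (R : realType) (n : nat) (A B : 'M[R]_n) :
  A \in @UTset R n -> B \in @UTset R n -> A *m B \in @UTset R n.
Proof.
rewrite !inE /= => /andP [uA iA] /andP [uB iB].
by apply/andP; split; [exact: upper_tri_mul | rewrite unitmx_mul iA].
Qed.

Definition UTmul (R : realType) (n : nat) (A B : UT R n) : UT R n :=
  exist _ (val A *m val B) (UTset_mul (valP A) (valP B)).

(* A ~ B iff B = a A for a nonzero scalar a, i.e. B is in the coset A Z,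
   where Z = { a 1 | a <> 0 } is the centre of G. *)
Definition scal_rel (R : realType) (n : nat) (A B : UT R n) : bool :=
  `[< exists a : R, a != 0 /\ val B = a *: val A >].

Lemma scal_rel_refl (R : realType) (n : nat) : reflexive (@scal_rel R n).
Proof. by move=> A; apply/asboolP; exists 1; rewrite oner_eq0 scale1r. Qed.

Lemma scal_rel_sym (R : realType) (n : nat) : symmetric (@scal_rel R n).
Proof.
suff H : forall A B : UT R n, scal_rel A B -> scal_rel B A.
  by move=> A B; apply/idP/idP => /H.
move=> A B /asboolP [a [a0 hB]]; apply/asboolP; exists a^-1.
by rewrite hB invr_eq0 a0 scalerA mulVf // scale1r.
Qed.

Lemma scal_rel_trans (R : realType) (n : nat) : transitive (@scal_rel R n).
Proof.
move=> B A C /asboolP [a [a0 hB]] /asboolP [b [b0 hC]]; apply/asboolP.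
by exists (b * a); rewrite hC hB mulf_neq0 // scalerA.
Qed.

Canonical scal_equiv (R : realType) (n : nat) :=
  EquivRel (@scal_rel R n) (@scal_rel_refl R n) (@scal_rel_sym R n)
    (@scal_rel_trans R n).

Notation GmodZ R n := (quotient_topology {eq_quot @scal_equiv R n}%qT).

Definition GmodZ_mul (R : realType) (n : nat) (x y : GmodZ R n) : GmodZ R n :=
  (\pi_(GmodZ R n) (UTmul (repr x) (repr y)))%qT.

Definition top_automorphism (R : realType) (n : nat)
    (phi : GmodZ R n -> GmodZ R n) : Prop :=
  {morph phi : x y / GmodZ_mul x y} /\
  exists psi : GmodZ R n -> GmodZ R n,
    [/\ cancel phi psi, cancel psi phi, continuous phi & continuous psi].

(* x ~_phi y iff y = g x phi(g)^{-1} for some g, written without inverses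
   as y phi(g) = g x. *)
Definition twisted_conj (R : realType) (n : nat)
    (phi : GmodZ R n -> GmodZ R n) (x y : GmodZ R n) : Prop :=
  exists g : GmodZ R n, GmodZ_mul y (phi g) = GmodZ_mul g x.

Definition twisted_classes (R : realType) (n : nat)
    (phi : GmodZ R n -> GmodZ R n) : set (set (GmodZ R n)) :=
  [set twisted_conj phi x | x in [set: GmodZ R n]].

Definition R_infinite (R : realType) (n : nat)
    (phi : GmodZ R n -> GmodZ R n) : Prop :=
  infinite_set (twisted_classes phi).

(* Main.v *)
Require Import Defs.
From mathcomp Require Import all_boot all_order all_algebra generic_quotient.
From mathcomp Require Import all_classical all_reals topology normedtype.
Import numFieldNormedType.Exports.
From mathcomp Require Import ring lra.
Import Order.TTheory GRing.Theory Num.Theory.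
Local Open Scope classical_set_scope.
Local Open Scope ring_scope.

Lemma real_aut_id {R : realType} (h : R -> R) :
  (forall x y, h (x + y) = h x + h y) ->
  (forall x y, h (x * y) = h x * h y) -> h 1 = 1 -> forall x, h x = x.
Proof.
move=> hD hM h1.
have h0 : h 0 = 0.
  have := hD 0 0; rewrite addr0; lra.
have hN : forall x, h (- x) = - h x.
  by move=> x; have := hD x (- x); rewrite subrr h0; lra.
have hB : forall x y, h (x - y) = h x - h y by move=> x y; rewrite hD hN.
have hpos : forall x, 0 <= x -> 0 <= h x.
  move=> x x0; rewrite -(sqr_sqrtr x0) expr2 hM -expr2; exact: sqr_ge0.
have hmono : forall x y, x <= y -> h x <= h y.
  by move=> x y xy; rewrite -subr_ge0 -hB; apply: hpos; rewrite subr_ge0.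
have hn : forall k : nat, h k%:R = k%:R.
  by elim=> [|k IH]; rewrite ?h0 // -addn1 natrD hD IH h1.
have hz : forall z : int, h z%:~R = z%:~R.
  by case=> k; rewrite ?NegzE ?mulrNz ?hN hn.
have hnm : forall (k : nat) x, h (k%:R * x) = k%:R * h x by move=> k x; rewrite hM hn.
have key : forall (k : nat) x, k%:R * h x - k%:R * x <= 1 /\ k%:R * x - k%:R * h x <= 1.
  move=> k x; have /andP[fl fu] := floor_itv (k%:R * x).
  have a1 := hmono _ _ fl; have a2 := hmono _ _ (ltW fu).
  rewrite hz hnm in a1; rewrite hz hnm in a2.
  rewrite intrD in fu a2; rewrite ?rmorph1 in fu a2.
  move: (k%:R * h x) (k%:R * x) ((Num.Def.floor (k%:R * x))%:~R) fl a1 fu a2 => p q r e1 e2 e3 e4; split; lra.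
move=> x; apply/eqP; rewrite eq_le; apply/andP; split; rewrite leNgt; apply/negP => lt.
- have [k hk] := ltr_add_invr lt.
  have [k1 _] := key k.+1 x.
  have : k.+1%:R * k.+1%:R^-1 < k.+1%:R * (h x - x) :> R.
    rewrite ltr_pM2l ?ltr0Sn //; move: hk; generalize (k.+1%:R^-1 : R) => e; lra.
  rewrite mulfV ?pnatr_eq0 // mulrBr; lra.
- have [k hk] := ltr_add_invr lt.
  have [_ k1] := key k.+1 x.
  have : k.+1%:R * k.+1%:R^-1 < k.+1%:R * (x - h x) :> R.
    rewrite ltr_pM2l ?ltr0Sn //; move: hk; generalize (k.+1%:R^-1 : R) => e; lra.
  rewrite mulfV ?pnatr_eq0 // mulrBr; lra.
Qed.

Lemma UT_of_diag {R : realType} {n : nat} (A : 'M[R]_n) :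
  upper_tri A -> (forall i, A i i != 0) -> A \in @UTset R n.
Proof.
move=> uA dA; rewrite inE /=; apply/andP; split => //.
rewrite unitmxE unitfE -det_tr det_trig; last first.
  apply/forallP => i; apply/forallP => j; apply/implyP => ij.
  by move/forallP: uA => /(_ j) /forallP /(_ i) /implyP /(_ ij); rewrite mxE.
by apply/prodf_neq0 => i _; rewrite mxE.
Qed.

Lemma UT_diag_nz {R : realType} {n : nat} (A : UT R n) (i : 'I_n) : val A i i != 0.
Proof.
have := valP A; rewrite inE /= => /andP [uA iA].
move: iA; rewrite unitmxE unitfE -det_tr det_trig; last first.
  apply/forallP => k; apply/forallP => j; apply/implyP => ij.
  by move/forallP: uA => /(_ j) /forallP /(_ k) /implyP /(_ ij); rewrite mxE.
by move/prodf_neq0 => /(_ i isT); rewrite mxE.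
Qed.

Lemma UT_upper {R : realType} {n : nat} (A : UT R n) (i j : 'I_n) : (j < i)%N -> val A i j = 0.
Proof.
have := valP A; rewrite inE /= => /andP [uA _] ji.
by move/forallP: uA => /(_ i) /forallP /(_ j) /implyP /(_ ji) /eqP.
Qed.

Lemma UT_mul_diag {R : realType} {n : nat} (A B : UT R n) (i : 'I_n) :
  (val A *m val B) i i = val A i i * val B i i.
Proof.
rewrite mxE (bigD1 i) //= big1 ?addr0 // => k ki.
have [lt|ge] := ltnP k i; first by rewrite UT_upper ?mul0r.
have lt : (i < k)%N by rewrite ltn_neqAle ge andbT eq_sym.
by rewrite (UT_upper B _ _ lt) mulr0.
Qed.

Definition elt {R : realType} {n : nat} (i j : 'I_n) (a : R) : 'M[R]_n :=
  1%:M + a *: delta_mx i j.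

Lemma elt_UT {R : realType} {n : nat} (i j : 'I_n) (a : R) :
  (i <= j)%N -> (i == j -> 1 + a != 0) -> elt i j a \in @UTset R n.
Proof.
move=> ij hij; apply: UT_of_diag.
  apply/forallP => k; apply/forallP => l; apply/implyP => lk.
  rewrite !mxE; have -> : (k == l) = false by apply/negP => /eqP e; rewrite e ltnn in lk.
  case: (k =P i) => [ki|]; case: (l =P j) => [lj|] /=; rewrite ?mulr0 ?addr0 //.
  by subst; move: (leq_trans lk ij); rewrite ltnn.
move=> k; rewrite !mxE eqxx mulr1n.
case: (eqVneq i j) => [eij|nij].
  subst; rewrite andbb; case: (k =P j) => [_|] /=; last by rewrite mulr0 addr0 oner_neq0.
  by rewrite mulr1 hij.
case: (k =P i) => [ki|] //=; case: (k =P j) => [kj|] //=; rewrite ?mulr0 ?addr0 ?oner_neq0 //.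
by subst; rewrite eqxx in nij.
Qed.

Lemma mulmx_deltaE {R : realType} {n : nat} (A : 'M[R]_n) (i j k l : 'I_n) :
  (A *m delta_mx i j) k l = A k i * (l == j)%:R.
Proof.
rewrite mxE (bigD1 i) //= big1 ?addr0; first by rewrite mxE eqxx.
by move=> k' nk; rewrite mxE (negbTE nk) mulr0.
Qed.

Lemma delta_mulmxE {R : realType} {n : nat} (A : 'M[R]_n) (i j k l : 'I_n) :
  (delta_mx i j *m A) k l = (k == i)%:R * A j l.
Proof.
rewrite mxE (bigD1 j) //= big1 ?addr0; first by rewrite mxE eqxx andbT.
by move=> k' nk; rewrite mxE (negbTE nk) andbF mul0r.
Qed.

Lemma pi_eqP {R : realType} {n : nat} (A B : UT R n) :
  (\pi_(GmodZ R n) A = \pi_(GmodZ R n) B)%qT <->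
  exists a : R, a != 0 /\ val B = a *: val A.
Proof.
split.
  by move/eqquotP => /asboolP.
by move=> h; apply/eqquotP; apply/asboolP.
Qed.

Lemma repr_pi {R : realType} {n : nat} (A : UT R n) :
  exists a : R, a != 0 /\ val A = a *: val (repr (\pi_(GmodZ R n) A)%qT).
Proof. by apply/pi_eqP; rewrite reprK. Qed.

Lemma pi_mul {R : realType} {n : nat} (A B : UT R n) :
  GmodZ_mul (\pi_(GmodZ R n) A)%qT (\pi_(GmodZ R n) B)%qT =
  (\pi_(GmodZ R n) (UTmul A B))%qT.
Proof.
rewrite /GmodZ_mul; apply/pi_eqP.
have [a [a0 ha]] := repr_pi A; have [b [b0 hb]] := repr_pi B.
exists (a * b); split; first by rewrite mulf_neq0.
by rewrite /= ha hb -scalemxAl -scalemxAr scalerA.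
Qed.

Lemma pi_repr {R : realType} {n : nat} (x : GmodZ R n) :
  x = (\pi_(GmodZ R n) (repr x))%qT.
Proof. by rewrite reprK. Qed.

Definition chi' {R : realType} {n : nat} (A : 'M[R]_n.+2) : R :=
  A ord0 ord0 / A ord_max ord_max.

Definition chi {R : realType} {n : nat} (x : GmodZ R n.+2) : R :=
  chi' (val (repr x)).

Lemma chi'_nz {R : realType} {n : nat} (A : UT R n.+2) : chi' (val A) != 0.
Proof. by rewrite /chi' mulf_neq0 ?invr_eq0 ?UT_diag_nz. Qed.

Lemma chi_pi {R : realType} {n : nat} (A : UT R n.+2) :
  chi (\pi_(GmodZ R n.+2) A)%qT = chi' (val A).
Proof.
rewrite /chi /chi'; have [a [a0 ->]] := repr_pi A.
set X := val (repr _); rewrite !mxE.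
have := UT_diag_nz (repr (\pi_(GmodZ R n.+2) A)%qT) ord_max; rewrite -/X => hX.
by field; rewrite a0 hX.
Qed.

Lemma chi_mul {R : realType} {n : nat} (x y : GmodZ R n.+2) :
  chi (GmodZ_mul x y) = chi x * chi y.
Proof.
rewrite /GmodZ_mul chi_pi /chi /chi' /= !UT_mul_diag.
have := UT_diag_nz (repr x) ord_max; have := UT_diag_nz (repr y) ord_max.
by move=> h1 h2; field; rewrite h1 h2.
Qed.

Lemma chi_nz {R : realType} {n : nat} (x : GmodZ R n.+2) : chi x != 0.
Proof. exact: chi'_nz. Qed.

Lemma ord0_max {n : nat} : (ord0 : 'I_n.+2) != ord_max.
Proof. by []. Qed.

Definition umx {R : realType} {n : nat} (t : R) : 'M[R]_n.+2 := elt ord0 (@ord_max n.+1) t.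

Lemma umx_UT {R : realType} {n : nat} (t : R) : umx t \in @UTset R n.+2.
Proof. by apply: elt_UT. Qed.

Definition u {R : realType} {n : nat} (t : R) : UT R n.+2 := exist _ (umx t) (umx_UT t).

Lemma A_mul_E {R : realType} {n : nat} (A : UT R n.+2) :
  val A *m delta_mx (@ord0 n.+1) (@ord_max n.+1) = val A ord0 ord0 *: delta_mx (@ord0 n.+1) (@ord_max n.+1).
Proof.
apply/matrixP => i j; rewrite mulmx_deltaE !mxE.
case: (eqVneq i ord0) => [->|ni]; first by []. 
rewrite UT_upper ?mul0r //=; last by rewrite lt0n.
by rewrite mulr0.
Qed.

Lemma E_mul_A {R : realType} {n : nat} (A : UT R n.+2) :
  delta_mx (@ord0 n.+1) (@ord_max n.+1) *m val A = val A ord_max ord_max *: delta_mx (@ord0 n.+1) (@ord_max n.+1).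
Proof.
apply/matrixP => i j; rewrite delta_mulmxE !mxE.
case: (eqVneq j ord_max) => [->|nj]; first by rewrite andbT mulrC.
rewrite UT_upper ?mulr0 ?andbF //=; first by rewrite mulr0.
by rewrite ltn_neqAle -ltnS ltn_ord andbT; apply: contra nj => /eqP e; apply/eqP/val_inj.
Qed.

Lemma conj_umx {R : realType} {n : nat} (A : UT R n.+2) (t : R) :
  val A *m umx t = umx (chi' (val A) * t) *m val A.
Proof.
rewrite /umx /elt mulmxDr mulmx1 mulmxDl mul1mx -scalemxAr -scalemxAl A_mul_E E_mul_A.
rewrite !scalerA; congr (_ + _ *: _).
have := UT_diag_nz A ord_max; rewrite /chi' => h; field; exact: h.
Qed.

Lemma umx_mul {R : realType} {n : nat} (t s : R) :
  umx t *m umx s = umx (t + s) :> 'M[R]_n.+2.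
Proof.
rewrite /umx /elt mulmxDr mulmx1 mulmxDl mul1mx -scalemxAr -scalemxAl.
by rewrite mul_delta_mx_0 // scaler0 scaler0 addr0 scalerDl addrA.
Qed.

Lemma u_mul {R : realType} {n : nat} (t s : R) :
  GmodZ_mul (\pi_(GmodZ R n.+2) (u t))%qT (\pi_(GmodZ R n.+2) (u s))%qT =
  (\pi_(GmodZ R n.+2) (u (t + s)))%qT.
Proof. by rewrite pi_mul; f_equal; apply: val_inj; rewrite /= umx_mul. Qed.

Lemma umx00 {R : realType} {n : nat} (t : R) : (@umx R n t) ord0 ord0 = 1.
Proof. by rewrite /umx /elt !mxE /= mulr0 addr0. Qed.

Lemma umx0N {R : realType} {n : nat} (t : R) : (@umx R n t) ord0 ord_max = t.
Proof. by rewrite /umx /elt !mxE /= eqxx mulr1 add0r. Qed.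

Lemma u_inj {R : realType} {n : nat} (t s : R) :
  (\pi_(GmodZ R n.+2) (u t))%qT = (\pi_(GmodZ R n.+2) (u s))%qT -> t = s.
Proof.
move/pi_eqP => [a [a0 h]].
have h1 := congr1 (fun M : 'M[R]_n.+2 => M ord0 ord0) h.
have h2 := congr1 (fun M : 'M[R]_n.+2 => M ord0 ord_max) h.
move: h1 h2; rewrite /= !mxE !eqxx (negbTE ord0_max) /= !mulr0 !addr0 !mulr1 !add0r.
by move=> <- ->; rewrite mul1r.
Qed.

Lemma conj_pi {R : realType} {n : nat} (x : GmodZ R n.+2) (t : R) :
  GmodZ_mul x (\pi_(GmodZ R n.+2) (u t))%qT =
  GmodZ_mul (\pi_(GmodZ R n.+2) (u (chi x * t)))%qT x.
Proof.
rewrite [in LHS](pi_repr x) [in RHS](pi_repr x) !pi_mul.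
by f_equal; apply: val_inj; rewrite /= conj_umx chi_pi.
Qed.

Lemma cancel_r {R : realType} {n : nat} (x y z : GmodZ R n) :
  GmodZ_mul x z = GmodZ_mul y z -> x = y.
Proof.
rewrite (pi_repr x) (pi_repr y) (pi_repr z) !pi_mul => /pi_eqP [a [a0 h]].
apply/pi_eqP; exists a; split => //.
have hz : val (repr z) \in unitmx by have := valP (repr z); rewrite inE => /andP [].
move: h => /= /(congr1 (mulmx^~ (invmx (val (repr z))))).
by rewrite -scalemxAl !mulmxK.
Qed.

Lemma oneUT_proof {R : realType} {n : nat} : elt (@ord0 n) ord0 (0 : R) \in @UTset R n.+1.
Proof. by apply: elt_UT => // _; rewrite addr0 oner_neq0. Qed.

Definition oneUT {R : realType} {n : nat} : UT R n.+1 := exist _ (elt (@ord0 n) ord0 (0 : R)) (@oneUT_proof R n).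

Lemma oneUT_val {R : realType} {n : nat} : val (@oneUT R n) = 1%:M.
Proof. by rewrite /= /elt scale0r addr0. Qed.

Definition one {R : realType} {n : nat} : GmodZ R n.+1 := (\pi_(GmodZ R n.+1) (@oneUT R n))%qT.

Lemma mul1q {R : realType} {n : nat} (x : GmodZ R n.+1) : GmodZ_mul one x = x.
Proof.
rewrite /one [in LHS](pi_repr x) pi_mul [in RHS](pi_repr x).
by f_equal; apply: val_inj; rewrite /= /elt scale0r addr0 mul1mx.
Qed.

Lemma mulq1 {R : realType} {n : nat} (x : GmodZ R n.+1) : GmodZ_mul x one = x.
Proof.
rewrite /one [in LHS](pi_repr x) pi_mul [in RHS](pi_repr x).
by f_equal; apply: val_inj; rewrite /= /elt scale0r addr0 mulmx1.
Qed.

Lemma elt_mul_id {R : realType} {n : nat} (i j : 'I_n) : i != j ->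
  elt i j (1 : R) *m (elt i j 1 *m elt i i 1) = elt i i 1 *m elt i j 1.
Proof.
move=> ij; rewrite /elt !scale1r.
have h1 : delta_mx i j *m delta_mx i i = 0 :> 'M[R]_n by rewrite mul_delta_mx_0 // eq_sym.
have h3 : delta_mx i j *m delta_mx i j = 0 :> 'M[R]_n by rewrite mul_delta_mx_0 // eq_sym.
have h2 : delta_mx i i *m delta_mx i j = delta_mx i j :> 'M[R]_n by rewrite mul_delta_mx.
rewrite !(mulmxDr, mulmxDl, mulmx1, mul1mx, h1, h2, h3, addr0) mulmx0 add0r addr0.
by rewrite -!addrA; congr (_ + _); rewrite addrCA.
Qed.

Definition Pc {R : realType} {n : nat} (x : GmodZ R n) : Prop :=
  forall a b c : GmodZ R n,
    GmodZ_mul c (GmodZ_mul b a) = GmodZ_mul a b -> GmodZ_mul x c = GmodZ_mul c x.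

Lemma Pc_aut {R : realType} {n : nat} (phi : GmodZ R n -> GmodZ R n) (x : GmodZ R n) :
  top_automorphism phi -> Pc x -> Pc (phi x).
Proof.
move=> [hm [psi [k1 k2 _ _]]] hx a b c h.
have h' : GmodZ_mul (psi c) (GmodZ_mul (psi b) (psi a)) = GmodZ_mul (psi a) (psi b).
  by apply: (can_inj k1); rewrite !hm !k2.
by have := hx _ _ _ h' => /(congr1 phi); rewrite !hm k2.
Qed.

Lemma Pc_u {R : realType} {n : nat} (t : R) : Pc (\pi_(GmodZ R n.+2) (u t))%qT.
Proof.
move=> a b c h.
have hc : chi c = 1.
  have := congr1 chi h; rewrite !chi_mul.
  have := chi_nz a; have := chi_nz b => ha hb e.
  apply: (mulIf (mulf_neq0 hb ha)); transitivity (chi c * (chi b * chi a)); [ring | rewrite e; ring].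
by rewrite (conj_pi c t) hc mul1r.
Qed.

Lemma two_nz {R : realType} : (1 + 1 : R) != 0.
Proof. by apply/negP => /eqP; lra. Qed.

Lemma comm_entries {R : realType} {n : nat} (X : UT R n) (i j : 'I_n) (lam : R) :
  (i < j)%N -> elt i j 1 *m val X = lam *: (val X *m elt i j 1) ->
  forall k l, (k == i)%:R * val X j l = val X k i * (l == j)%:R.
Proof.
move=> ij h.
have hE : forall k l, (elt i j 1 *m val X) k l = val X k l + (k == i)%:R * val X j l.
  by move=> k l; rewrite /elt scale1r mulmxDl mul1mx mxE delta_mulmxE.
have hE' : forall k l, (val X *m elt i j 1) k l = val X k l + val X k i * (l == j)%:R.
  by move=> k l; rewrite /elt scale1r mulmxDr mulmx1 mxE mulmx_deltaE.
have ji : (j == i) = false by apply/negbTE; apply: contraTneq ij => ->; rewrite ltnn.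
have hl : lam = 1.
  have := congr1 (fun M : 'M[R]_n => M j j) h; rewrite /= hE mxE hE' ji eqxx mul0r addr0.
  rewrite (UT_upper X j i ij) mul0r addr0 => e.
  by apply: (mulIf (UT_diag_nz X j)); rewrite mul1r -e.
move=> k l; have := congr1 (fun M : 'M[R]_n => M k l) h; rewrite /= hE mxE hE' hl mul1r.
by move/addrI.
Qed.

Lemma Pc_char {R : realType} {n : nat} (x : GmodZ R n.+2) :
  Pc x -> exists t : R, x = (\pi_(GmodZ R n.+2) (u t))%qT.
Proof.
move=> Hx.
have comm : forall i j : 'I_n.+2, (i < j)%N ->
    forall k l, (k == i)%:R * val (repr x) j l = val (repr x) k i * (l == j)%:R.
  move=> i j ij.
  have ij' : (i <= j)%N := ltnW ij.
  have inj : i == j -> 1 + (1 : R) != 0 by move=> _; exact: two_nz.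
  pose e : UT R n.+2 := exist _ (elt i j 1) (@elt_UT R n.+2 i j 1 ij' inj).
  pose d : UT R n.+2 := exist _ (elt i i 1) (@elt_UT R n.+2 i i 1 (leqnn i) (fun _ => two_nz)).
  have hrel : GmodZ_mul (\pi_(GmodZ R n.+2) e)%qT
      (GmodZ_mul (\pi_(GmodZ R n.+2) e)%qT (\pi_(GmodZ R n.+2) d)%qT) =
      GmodZ_mul (\pi_(GmodZ R n.+2) d)%qT (\pi_(GmodZ R n.+2) e)%qT.
    rewrite !pi_mul; f_equal; apply: val_inj; rewrite /= elt_mul_id //.
    by apply: contraTneq ij => ->; rewrite ltnn.
  have := Hx _ _ _ hrel; rewrite [in X in X -> _](pi_repr x) !pi_mul.
  move/pi_eqP => [lam [_ h]].
  exact: (comm_entries (repr x) i j lam ij h).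
set X := val (repr x).
have comm' : forall i j : 'I_n.+2, (i < j)%N ->
    forall k l, (k == i)%:R * X j l = X k i * (l == j)%:R := comm.
have hX := UT_diag_nz (repr x) ord0; rewrite -/X in hX.
exists (X ord0 ord_max / X ord0 ord0).
rewrite [LHS]pi_repr; apply/esym/pi_eqP; exists (X ord0 ord0); split => //.
apply/matrixP => k l; rewrite /= /umx /elt !mxE.
have -> : sval (repr x) k l = X k l by [].
clearbody X; clear comm.
have XNN : X ord_max ord_max = X ord0 ord0.
  by have := comm' ord0 ord_max isT ord0 ord_max; rewrite !eqxx mul1r mulr1.
case: (eqVneq l ord_max) => [->|lN].
  case: (eqVneq k ord0) => [->|k0].
    rewrite (negbTE ord0_max) /= mulr1 add0r; field; exact: hX.
  have := comm' ord0 k _ ord0 ord_max; rewrite eqxx mul1r => ->; last by rewrite lt0n.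
  by rewrite /= mulr0 addr0 eq_sym.
have lt : (l < @ord_max n.+1)%N.
  by rewrite ltn_neqAle -ltnS ltn_ord andbT; apply: contra lN => /eqP e; apply/eqP/val_inj.
have := comm' l ord_max lt k ord_max; rewrite eqxx mulr1 XNN => <-.
by rewrite andbF mulr0 addr0 mulrC.
Qed.

Lemma chi_surj {R : realType} {n : nat} (c : R) : c != 0 ->
  exists x : GmodZ R n.+2, chi x = c.
Proof.
move=> c0.
have hc : @ord0 n.+1 == ord0 -> 1 + (c - 1) != 0 by move=> _; rewrite addrC subrK.
exists (\pi_(GmodZ R n.+2) (exist _ (elt ord0 ord0 (c - 1)) (@elt_UT R n.+2 ord0 ord0 (c - 1) (leqnn _) hc)))%qT.
rewrite chi_pi /chi' /= /elt !mxE !eqxx /=. by rewrite mulr1 mulr0 addr0 invr1 mulr1 addrC subrK.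
Qed.

Theorem proposition5p4 (R : realType) (n : nat) (hn : (2 <= n)%N)
  (phi : GmodZ R n -> GmodZ R n) :
  top_automorphism phi -> R_infinite phi.
Proof.
case: n hn phi => [|[|m]] // _ phi H.
have H' := H; move: H' => [hm [psi [k1 k2 _ _]]].
have hf0 : forall t : R, exists s : R,
    phi (\pi_(GmodZ R m.+2) (u t))%qT = (\pi_(GmodZ R m.+2) (u s))%qT.
  by move=> t; apply: Pc_char; apply: Pc_aut H (Pc_u t).
have [f hf] := choice hf0.
have fadd : forall t s, f (t + s) = f t + f s.
  by move=> t s; apply: (@u_inj R m); rewrite -hf -u_mul hm !hf u_mul.
have f0 : f 0 = 0 by have := fadd 0 0; rewrite addr0; lra.
have f1 : f 1 != 0.
  apply/negP => /eqP e.
  have : phi (\pi_(GmodZ R m.+2) (u 1))%qT = phi (\pi_(GmodZ R m.+2) (u 0))%qT by rewrite !hf e f0.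
  by move/(can_inj k1)/u_inj/eqP; rewrite oner_eq0.
have key : forall x t, f (chi x * t) = chi (phi x) * f t.
  move=> x t; have := congr1 phi (conj_pi x t); rewrite !hm !hf.
  by rewrite (conj_pi (phi x) (f t)) => /cancel_r /u_inj.
have chiphi : forall x, chi (phi x) = chi x.
  pose h t := f t / f 1.
  have hid := @real_aut_id R h.
  have hk : forall x, h (chi x) = chi (phi x).
    by move=> x; rewrite /h -[chi x]mulr1 key mulfK.
  move=> x; rewrite -hk hid //.
  - by move=> a b; rewrite /h fadd mulrDl.
  - move=> a b; case: (eqVneq a 0) => [->|a0]; first by rewrite mul0r /h f0 !mul0r.
    have [g <-] := @chi_surj R m a a0.
    by rewrite hk /h key mulrA.
  - by rewrite /h divff.
have inv : forall x y, twisted_conj phi x y -> chi y = chi x.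
  move=> x y [g e]; have := congr1 chi e; rewrite !chi_mul chiphi => e'.
  by apply: (mulIf (chi_nz g)); rewrite e' mulrC.
have phi1 : phi one = one.
  apply: (@cancel_r R m.+2 _ _ (phi one)).
  by rewrite -hm mul1q mul1q.
have refl : forall x, twisted_conj phi x x.
  by move=> x; exists (@one R m.+1); rewrite phi1 mulq1 mul1q.
have hh : forall k : nat, exists x : GmodZ R m.+2, chi x = k.+1%:R.
  by move=> k; apply: chi_surj; rewrite pnatr_eq0.
have [xk hxk] := choice hh.
move=> fin.
pose g k := twisted_conj phi (xk k).
have : finite_set (g @^-1` twisted_classes phi).
  apply: finite_preimage fin => j k _ _ e.
  have := refl (xk j); rewrite /g in e; rewrite e => /inv.
  by rewrite !hxk => /eqP; rewrite eqr_nat => /eqP [].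
move=> F; apply: infinite_nat; apply: (sub_finite_set _ F) => k _; by exists (xk k).
Qed.
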